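(* Let $M=M_{\bar0}\oplus M_{\bar1}$ be an $\mathcal{R}$-module which is free of rank $1$ as a $U(\eta)$-module, $\eta=\mathbb{C}L_{0,0}\oplus\mathbb{C}G_{0,0}$, with a homogeneous free generator $1\in M_{\bar0}$, so $M=\mathbb{C}[L_{0,0}]1\oplus G_{0,0}\mathbb{C}[L_{0,0}]1$. Write $f(t^2)1:=f(L_{0,0})1$ and $t1:=G_{0,0}1$. Suppose $\lambda\in\mathbb{C}^*$ and $a,b\in\mathbb{C}$ are such that for all $m\in\mathbb{Z}$, $i\in\mathbb{Z}_+$ and $f\in\mathbb{C}[t^2]$, $L_{m,i}f(t^2)1=\lambda^m(\delta_{i,0}(t^2-mqa)+\delta_{q,-1}\delta_{i,1}b)f(t^2-mq)1$. Then $G_{m,i}1=\lambda^m\delta_{i,0}\,t1$ (i.e. $G_{m,i}1=\lambda^m\delta_{i,0}G_{0,0}1$) for all $m\in\mathbb{Z}$ and $i\in\mathbb{Z}_+$.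
   Context: Fix $q\in\mathbb{C}^*$; $\mathbb{Z}_+=\{0,1,2,\dots\}$; $\delta$ is the Kronecker delta. The Ramond-Block algebra $\mathcal{R}$ is the Lie superalgebra over $\mathbb{C}$ with even basis $\{L_{m,i}\mid m\in\mathbb{Z},i\in\mathbb{Z}_+\}$, odd basis $\{G_{l,j}\mid l\in\mathbb{Z},j\in\mathbb{Z}_+\}$ and brackets $[L_{m,i},L_{n,j}]=(n(i+q)-m(j+q))L_{m+n,i+j}$, $[L_{m,i},G_{l,j}]=(l(i+q)-m(j+\frac{q}{2}))G_{m+l,i+j}$, $[G_{l,i},G_{r,j}]=2qL_{l+r,i+j}$. Modules are supermodules. *)

(* Defs.v *)
From HB Require Import structures.
From mathcomp Require Import all_boot all_order all_algebra.
From mathcomp Require Import reals complex.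
Set Implicit Arguments. Unset Strict Implicit. Unset Printing Implicit Defensive.
Import Order.TTheory GRing.Theory Num.Theory.
Local Open Scope ring_scope.

(* The complex numbers are modelled as R[i] for an arbitrary R : realType
   (every realType is a complete archimedean ordered field, i.e. the reals). *)

Section RamondBlock.
Variable K : fieldType.
Variable V : lmodType K.

Definition pol_act (A : V -> V) (f : {poly K}) (v : V) : V :=
  \sum_(k < size f) f`_k *: iter k A v.

Definition subspace (P : V -> Prop) : Prop :=
  P 0 /\ forall (c : K) (u w : V), P u -> P w -> P (c *: u + w).

Definition super_decomposition (V0 V1 : V -> Prop) : Prop :=
  [/\ subspace V0, subspace V1,
      (forall v, exists v0 v1, [/\ V0 v0, V1 v1 & v = v0 + v1])
    & (forall v, V0 v -> V1 v -> v = 0)].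

(* Action of the basis elements L_{m,i} (even) and G_{l,j} (odd) of the
   Ramond-Block algebra R (parameter q) on the supermodule V = V0 (+) V1:
   parity compatibility and the super-bracket relations. *)
Definition RB_module (q : K) (V0 V1 : V -> Prop)
    (L G : int -> nat -> {linear V -> V}) : Prop :=
  super_decomposition V0 V1 /\
  [/\ (forall m i v, (V0 v -> V0 (L m i v)) /\ (V1 v -> V1 (L m i v))),
      (forall l j v, (V0 v -> V1 (G l j v)) /\ (V1 v -> V0 (G l j v))),
      (forall (m n : int) (i j : nat) v,
         L m i (L n j v) - L n j (L m i v) =
         (n%:~R * (i%:R + q) - m%:~R * (j%:R + q)) *: L (m + n) (i + j)%N v),
      (forall (m l : int) (i j : nat) v,
         L m i (G l j v) - G l j (L m i v) =
         (l%:~R * (i%:R + q) - m%:~R * (j%:R + q / 2)) *: G (m + l) (i + j)%N v)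
    & (forall (l r : int) (i j : nat) v,
         G l i (G r j v) + G r j (G l i v) = (2 * q) *: L (l + r) (i + j)%N v)].

(* V is free of rank 1 over U(eta), eta = C L_{0,0} + C G_{0,0}, with free
   generator v1: the PBW basis of U(eta) is {L00^k, G00 L00^k}, so this says
   (f, g) |-> f(L00) v1 + G00 g(L00) v1 is a bijection C[x]^2 -> V. *)
Definition free_rank1_eta (L G : int -> nat -> {linear V -> V}) (v1 : V) : Prop :=
  bijective (fun fg : {poly K} * {poly K} =>
    pol_act (L 0 0%N) fg.1 v1 + G 0 0%N (pol_act (L 0 0%N) fg.2 v1)).

(* The polynomial  delta_{i,0}(t^2 - m q a) + delta_{q,-1} delta_{i,1} b
   in the variable x = t^2. *)
Definition Lcoef (q a b : K) (m : int) (i : nat) : {poly K} :=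
  (i == 0%N)%:R *: ('X - (m%:~R * q * a)%:P)
  + (((q == -1) && (i == 1%N))%:R * b)%:P.

End RamondBlock.

(* Main.v *)
Require Import Defs.
From HB Require Import structures.
From mathcomp Require Import all_boot all_order all_algebra.
From mathcomp Require Import reals complex.
From mathcomp Require Import ring zify.
Import Order.TTheory GRing.Theory Num.Theory.
Local Open Scope ring_scope.

Section PA.
Variable K : fieldType.
Variable V : lmodType K.
Variable A : {linear V -> V}.

Lemma pa_widen (f : {poly K}) n v : (size f <= n)%N ->
  pol_act A f v = \sum_(k < n) f`_k *: iter k A v.
Proof.
move=> H; rewrite /pol_act (big_ord_widen n (fun k => f`_k *: iter k A v) H).
rewrite big_mkcond; apply: eq_bigr => i _; case: ifP => // /negbT.
by rewrite -leqNgt => /(nth_default 0) ->; rewrite scale0r.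
Qed.

Lemma pa_lin c (f g : {poly K}) v :
  pol_act A (c *: f + g) v = c *: pol_act A f v + pol_act A g v.
Proof.
set n := maxn (size f) (size g).
have Hf : (size f <= n)%N by rewrite leq_maxl.
have Hg : (size g <= n)%N by rewrite leq_maxr.
have Hfg : (size (c *: f + g)%R <= n)%N.
  by rewrite (leq_trans (size_polyD (c *: f) g)) // geq_max (leq_trans (size_scale_leq _ _)).
rewrite (pa_widen _ _ _ Hf) (pa_widen _ _ _ Hg) (pa_widen _ _ _ Hfg) scaler_sumr -big_split.
by apply: eq_bigr => i _; rewrite coefD coefZ scalerDl scalerA.
Qed.

Lemma pa0 v : pol_act A 0 v = 0.
Proof. by rewrite /pol_act size_poly0 big_ord0. Qed.

Lemma paD f g v : pol_act A (f + g) v = pol_act A f v + pol_act A g v.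
Proof. by have := pa_lin 1 f g v; rewrite !scale1r. Qed.

Lemma paZ c f v : pol_act A (c *: f) v = c *: pol_act A f v.
Proof. by have := pa_lin c f 0 v; rewrite !addr0 pa0 addr0. Qed.

Lemma paN f v : pol_act A (- f) v = - pol_act A f v.
Proof. by rewrite -(scaleN1r f) paZ scaleN1r. Qed.

Lemma paB f g v : pol_act A (f - g) v = pol_act A f v - pol_act A g v.
Proof. by rewrite paD paN. Qed.

Lemma paC c v : pol_act A c%:P v = c *: v.
Proof.
rewrite (pa_widen _ _ _ (size_polyC_leq1 c)) big_ord_recl big_ord0 addr0.
by rewrite coefC.
Qed.

Lemma pa1 v : pol_act A 1 v = v.
Proof. by rewrite -polyC1 paC scale1r. Qed.

Lemma paX f v : pol_act A ('X * f) v = A (pol_act A f v).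
Proof.
have H : (size ('X * f)%R <= (size f).+1)%N.
  by rewrite (leq_trans (size_polyMleq _ _)) // size_polyX.
rewrite (pa_widen _ _ _ H) big_ord_recl coefXM eqxx scale0r add0r /pol_act.
rewrite linear_sum; apply: eq_bigr => i _.
have -> : (lift ord0 i : nat) = i.+1 by [].
by rewrite coefXM /= linearZ /=.
Qed.

Lemma paXC p c v : pol_act A (p * 'X + c%:P) v = A (pol_act A p v) + c *: v.
Proof. by rewrite paD mulrC paX paC. Qed.

Lemma pa_comm (T : {linear V -> V}) s f v :
  (forall w, T (A w) = A (T w) - s *: T w) ->
  T (pol_act A f v) = pol_act A (f \Po ('X - s%:P)) (T v).
Proof.
move=> HT; elim/poly_ind: f => [|p c IH].
  by rewrite comp_poly0 !pa0 linear0.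
rewrite paXC linearD linearZ /= HT IH comp_polyD comp_polyM comp_polyX comp_polyC.
rewrite paD paC mulrBr paB (mulrC _ (s%:P)) mul_polyC paZ (mulrC _ 'X) paX //.
Qed.

Lemma paZv f c v : pol_act A f (c *: v) = c *: pol_act A f v.
Proof.
elim/poly_ind: f => [|p d IH]; first by rewrite !pa0 scaler0.
by rewrite !paXC IH linearZ /= scalerDr !scalerA mulrC.
Qed.

Lemma pa_mul f h v : pol_act A f (pol_act A h v) = pol_act A (f * h) v.
Proof.
elim/poly_ind: f => [|p d IH]; first by rewrite mul0r !pa0.
rewrite paXC IH mulrDl paD mul_polyC paZ -mulrA (mulrC 'X h) mulrA.
by rewrite (mulrC (p * h) 'X) paX.
Qed.

Lemma pa_closed (P : V -> Prop) f v : subspace P -> (forall w, P w -> P (A w)) ->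
  P v -> P (pol_act A f v).
Proof.
move=> [P0 PS] HA Pv; elim/poly_ind: f => [|p d IH]; first by rewrite pa0.
by rewrite paXC addrC; apply: PS => //; apply: HA.
Qed.

End PA.

Lemma LcoefE0 (F : fieldType) (q a b : F) m :
  Lcoef q a b m 0 = 'X - (m%:~R * q * a)%:P.
Proof. by rewrite /Lcoef eqxx scale1r andbF mul0r addr0. Qed.

Lemma LcoefES (F : fieldType) (q a b : F) m i :
  Lcoef q a b m i.+1 = (((q == -1) && (i.+1 == 1)%N)%:R * b)%:P.
Proof. by rewrite /Lcoef /= scale0r add0r. Qed.

Lemma LcoefESS (F : fieldType) (q a b : F) m i :
  Lcoef q a b m (i.+1 + i.+1)%N = 0.
Proof. by rewrite /Lcoef addSn addnS /= andbF mul0r scale0r add0r. Qed.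

Lemma poly_key0 (F : fieldType) (mu c e s : F) (g : {poly F}) : mu != 0 ->
  (2 * mu) *: (('X - c%:P) * (g \Po ('X - s%:P))) - (g \Po ('X - s%:P)) * ('X * g)
  = (mu * mu) *: ('X - e%:P) -> g = mu%:P.
Proof.
move=> mu0; set g' := g \Po _; set P := (2 * mu) *: ('X - c%:P).
have Hsz : size g' = size g by rewrite size_comp_poly2 // size_XsubC.
rewrite scalerAl -/P (mulrC P) -mulrBr => E.
have mm0 : mu * mu != 0 by rewrite mulf_neq0.
have sR : size ((mu * mu) *: ('X - e%:P)) = 2 by rewrite size_scale // size_XsubC.
have g'0 : g' != 0 by apply: contra_eqN sR => /eqP g'0; rewrite -E g'0 mul0r size_poly0.
have h0 : P - 'X * g != 0.
  by apply: contra_eqN sR => /eqP h0; rewrite -E h0 mulr0 size_poly0.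
have g0 : g != 0 by rewrite -size_poly_eq0 -Hsz size_poly_eq0.
have sP : (size P <= 2)%N by rewrite (leq_trans (size_scale_leq _ _)) // size_XsubC.
have sXg : size ('X * g) = (size g).+1 by rewrite mulrC size_mulX.
have sg : (size g <= 1)%N.
  rewrite leqNgt; apply/negP => Hg.
  have sh : size (P - 'X * g) = (size g).+1.
    rewrite addrC size_polyDl size_polyN sXg //.
    by rewrite (leq_ltn_trans sP).
  move: sR; rewrite -E size_mul // sh Hsz; lia.
have Eg := size1_polyC sg; set d := g`_0 in Eg.
move: E; rewrite /g' Eg comp_polyC => /(congr1 (fun p : {poly F} => p`_1)).
rewrite /P !coefE /=.
rewrite !subr0 !mulr1 !mul1r => H; congr (_%:P).
have : (d - mu) * (d - mu) = 0.
  have -> : (d - mu) * (d - mu) = mu * mu - d * (2 * mu - d) by ring.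
  by rewrite H subrr.
by move/eqP; rewrite mulf_eq0 orbb subr_eq0 => /eqP.
Qed.

Lemma poly_key1 (F : fieldType) (mu c s : F) (g : {poly F}) :
  (2 * mu) *: (c%:P * (g \Po ('X - s%:P))) - (g \Po ('X - s%:P)) * ('X * g)
  = (mu * mu) *: 0 -> g = 0.
Proof.
set g' := g \Po _; rewrite scaler0 scalerAl scale_polyC (mulrC _%:P) -mulrBr.
move/eqP; rewrite mulf_eq0 => /orP [].
  by rewrite comp_poly2_eq0 ?size_XsubC // => /eqP.
rewrite subr_eq0 => /eqP E.
have : ('X * g)`_0 = 0 by rewrite coefXM.
rewrite -E coefC /= => E0.
by move/eqP: E; rewrite E0 eq_sym mulf_eq0 polyX_eq0 /= => /eqP.
Qed.


Arguments poly_key0 {F mu c e s g}.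
Arguments poly_key1 {F mu c s g}.

Theorem lemma3p4 (R : realType) (q : R[i]) (V : lmodType R[i])
    (V0 V1 : V -> Prop) (L G : int -> nat -> {linear V -> V}) (v1 : V)
    (lambda a b : R[i]) :
  q != 0 ->
  RB_module q V0 V1 L G ->
  V0 v1 ->
  free_rank1_eta L G v1 ->
  lambda != 0 ->
  (forall (m : int) (i : nat) (f : {poly R[i]}),
     L m i (pol_act (L 0 0%N) f v1) =
     pol_act (L 0 0%N)
       (lambda ^ m *: (Lcoef q a b m i * (f \Po ('X - (m%:~R * q)%:P)))) v1) ->
  forall (m : int) (i : nat),
    G m i v1 = (lambda ^ m * (i == 0%N)%:R) *: G 0 0%N v1.
Proof.
move=> qn0 [[V0s V1s Vdec V01] [Lpar Gpar HLL HLG HGG]] v0 Hfree ln0 HL m i.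
set A := L 0 0%N.
have two0 : (2 : R[i]) != 0 by rewrite pnatr_eq0.
have half : forall x y : V, x + x = (2 * q) *: y -> x = q *: y.
  move=> x y H; apply: (scalerI two0).
  by rewrite scaler_nat mulr2n H scalerA.
have inj : forall f h, pol_act A f v1 = pol_act A h v1 -> f = h.
  move=> f h E.
  have := bij_inj Hfree (x1 := (f, 0)) (x2 := (h, 0)).
  rewrite /= !pa0 !linear0 !addr0 => /(_ E); by case.
have HGA : forall w, G m i (A w) = A (G m i w) - (m%:~R * q) *: G m i w.
  move=> w; have := HLG 0 m 0%N i w.
  rewrite add0r add0n mulr0z mul0r subr0 add0r => <-.
  by rewrite opprB addrC subrK.
have HG0A : forall w, G 0 0%N (A w) = A (G 0 0%N w) - 0 *: G 0 0%N w.
  move=> w; have := HLG 0 0 0%N 0%N w.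
  rewrite add0r add0n mulr0z !mul0r subr0 scale0r subr0 => /eqP.
  by rewrite subr_eq0 => /eqP ->.
have GA0 : forall f w, G 0 0%N (pol_act A f w) = pol_act A f (G 0 0%N w).
  move=> f w; rewrite (@pa_comm _ _ A (G 0 0%N) 0 f w HG0A) polyC0 subr0 comp_polyXr //.
have HG00 : forall w, G 0 0%N (G 0 0%N w) = q *: A w.
  move=> w; apply: half; by rewrite HGG.
have [g Hg] : exists g, G m i v1 = G 0 0%N (pol_act A g v1).
  have [F' _ HF'] := Hfree.
  move: (HF' (G m i v1)); case: (F' (G m i v1)) => f g /= E; exists g.
  have Hpc : forall h, V0 (pol_act A h v1).
    move=> h; apply: pa_closed => // w; exact: (Lpar 0 0%N w).1.
  have Hf0 := Hpc f.
  have Hf1 : V1 (pol_act A f v1).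
    have -> : pol_act A f v1 = (-1) *: G 0 0%N (pol_act A g v1) + G m i v1.
      by rewrite -E scaleN1r addrC addrK.
    apply: V1s.2; first exact: (Gpar 0 0%N _).1 (Hpc g).
    exact: (Gpar m i _).1 v0.
  by rewrite -E (V01 _ Hf0 Hf1) add0r.
set u := pol_act A g v1.
set g' := g \Po ('X - (m%:~R * q)%:P).
have Gu : G m i u = pol_act A g' (G m i v1) by apply: pa_comm.
have E1 : G m i (G m i v1) = (2 * q) *: L m i u - G 0 0%N (G m i u).
  have := HGG 0 m 0%N i u; rewrite add0r add0n => <-.
  by rewrite Hg (addrC (G 0 0%N _)) addrK.
have E3 : G 0 0%N (G m i u) = q *: pol_act A (g' * ('X * g)) v1.
  by rewrite Gu Hg GA0 HG00 paZv -paX pa_mul.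
rewrite E3 HL -!paZ -paB in E1.
have E2 : G m i (G m i v1) = q *: L (m + m) (i + i)%N (pol_act A 1 v1).
  by rewrite pa1; apply: half; rewrite HGG.
rewrite HL comp_polyC mulr1 -paZ E1 in E2.
have {E2} := inj _ _ E2.
rewrite (mulrC 2 q) -(scalerA q 2) -scalerBr => /(scalerI qn0).
rewrite scalerA expfzDr // -/g' => Ep.
destruct i as [|i].
  rewrite LcoefE0 LcoefE0 in Ep.
  by rewrite Hg (poly_key0 (expfz_neq0 m ln0) Ep) paC linearZ mulr1.
rewrite LcoefES LcoefESS in Ep.
by rewrite Hg (poly_key1 Ep) pa0 linear0 mulr0 scale0r.
Qed.
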